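(* Consider problem (PI): minimize $f(x)$ subject to $x\in X$, $g_i(x)\le 0$, $i=1,\dots,m$, where $\Gamma\subseteq\mathbb R^n$ is an open convex set and $X\subseteq\Gamma$ is convex. Let $\bar S$ be its solution set and $\bar x\in\bar S$. Assume $f:\Gamma\to\mathbb R$ is continuously differentiable and quasiconvex on $\Gamma$, $g_i$ for $i\in I(\bar x)$ are differentiable and quasiconvex on $\Gamma$, $g_i$ for $i\notin I(\bar x)$ are continuous at $\bar x$, $\nabla f(\bar x)\ne 0$, GMFCQ holds at $\bar x$, and $\lambda$ is a (fixed) KKT multiplier at $\bar x$. Define \[ \begin{aligned} S_1'(\lambda)&:=\{x\in X_1(\lambda)\mid \nabla f(x)^T(\bar x-x)=0,\ \nabla f(x)\ne0\},\\ S_2'(\lambda)&:=\{x\in X_1(\lambda)\mid \nabla f(x)^T(\bar x-x)\ge0,\ \nabla f(x)\ne0\},\\ S_3'(\lambda)&:=\{x\in X_1(\lambda)\mid \nabla f(x)^T(\bar x-x)=\nabla f(\bar x)^T(x-\bar x),\ \nabla f(x)\ne0\},\\ S_4'(\lambda)&:=\{x\in X_1(\lambda)\mid \nabla f(x)^T(\bar x-x)\ge\nabla f(\bar x)^T(x-\bar x),\ \nabla f(x)\ne0\},\\ S_5'(\lambda)&:=\{x\in X_1(\lambda)\mid \nabla f(x)^T(\bar x-x)=\nabla f(\bar x)^T(x-\bar x)=0,\ \nabla f(x)\ne0\}. \end{aligned} \] Then $\bar S=S_1'(\lambda)=S_2'(\lambda)=S_3'(\lambda)=S_4'(\lambda)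=S_5'(\lambda)$.
   Context: Quasiconvexity on $\Gamma$: $f(x+t(y-x))\le\max\{f(x),f(y)\}$ for all $x,y\in\Gamma$, $t\in[0,1]$. Feasible set $S:=\{x\in X\mid g_i(x)\le0,\ i=1,\dots,m\}$; $\bar S$ the set of global minimizers of $f$ on $S$. Active index set $I(x):=\{i\mid g_i(x)=0\}$. For a cone $C$, its negative polar is $C^*:=\{x\in\mathbb R^n\mid c^Tx\le 0\ \forall c\in C\}$; $T_X(x)$ is the tangent cone of $X$ at $x$ and $N_X(x):=(T_X(x))^*$ is the normal cone. GMFCQ holds at $\bar x$ iff there is $y\in (N_X(\bar x))^*$ with $\nabla g_i(\bar x)^Ty<0$ for all $i\in I(\bar x)$. A KKT multiplier at $\bar x$ is $\lambda\in\mathbb R^m$ with $\lambda_i\ge0$ for all $i$, $\lambda_ig_i(\bar x)=0$ for all $i$, and $\big[\nabla f(\bar x)+\sum_{i\in I(\bar x)}\lambda_i\nabla g_i(\bar x)\big]^T(x-\bar x)\ge0$ for all $x\in X$. Define $\tilde I(\bar x,\lambda):=\{i\mid g_i(\bar x)=0,\ \lambda_i>0\}$ and $X_1(\lambda):=\{x\in X\mid g_i(x)=0\ \forall i\in\tilde I(\bar x,\lambda),\ g_i(x)\le0\ \forall i\notin\tilde I(\bar x,\lambda)\}$. *)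

(* Defs.v *)
From Stdlib Require Import Reals List.
From Stdlib Require Fin.
Open Scope R_scope.

Definition vec (n : nat) := Fin.t n -> R.

Definition vzero {n} : vec n := fun _ => 0.
Definition vadd {n} (x y : vec n) : vec n := fun i => x i + y i.
Definition vsub {n} (x y : vec n) : vec n := fun i => x i - y i.
Definition vscal {n} (t : R) (x : vec n) : vec n := fun i => t * x i.

Fixpoint dot (n : nat) : vec n -> vec n -> R :=
  match n return vec n -> vec n -> R with
  | O => fun _ _ => 0
  | S k => fun x y => x Fin.F1 * y Fin.F1
                      + dot k (fun i => x (Fin.FS i)) (fun i => y (Fin.FS i))
  end.
Arguments dot {n} x y.

Definition norm {n} (x : vec n) : R := sqrt (dot x x).

Definition is_open {n} (G : vec n -> Prop) : Prop :=
  forall x, G x -> exists eps, eps > 0 /\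
    forall y, norm (vsub y x) < eps -> G y.

Definition is_convex {n} (C : vec n -> Prop) : Prop :=
  forall x y t, C x -> C y -> 0 <= t <= 1 -> C (vadd x (vscal t (vsub y x))).

Definition quasiconvex_on {n} (G : vec n -> Prop) (f : vec n -> R) : Prop :=
  forall x y t, G x -> G y -> 0 <= t <= 1 ->
    f (vadd x (vscal t (vsub y x))) <= Rmax (f x) (f y).

Definition has_grad {n} (f : vec n -> R) (x g : vec n) : Prop :=
  forall eps, eps > 0 -> exists delta, delta > 0 /\
    forall y, norm (vsub y x) < delta ->
      Rabs (f y - f x - dot g (vsub y x)) <= eps * norm (vsub y x).

Definition cont_at {n} (f : vec n -> R) (x : vec n) : Prop :=
  forall eps, eps > 0 -> exists delta, delta > 0 /\
    forall y, norm (vsub y x) < delta -> Rabs (f y - f x) < eps.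

Definition vcont_at {n} (F : vec n -> vec n) (x : vec n) : Prop :=
  forall eps, eps > 0 -> exists delta, delta > 0 /\
    forall y, norm (vsub y x) < delta -> norm (vsub (F y) (F x)) < eps.

Definition seq_cv {n} (u : nat -> vec n) (l : vec n) : Prop :=
  forall eps, eps > 0 -> exists N, forall k, (N <= k)%nat -> norm (vsub (u k) l) < eps.

Definition tangent_cone {n} (X : vec n -> Prop) (x : vec n) : vec n -> Prop :=
  fun d => exists (xs : nat -> vec n) (ts : nat -> R),
    (forall k, X (xs k)) /\ (forall k, ts k > 0) /\ Un_cv ts 0 /\
    seq_cv (fun k => vscal (/ ts k) (vsub (xs k) x)) d.

Definition polar {n} (C : vec n -> Prop) : vec n -> Prop :=
  fun y => forall c, C c -> dot c y <= 0.

Definition normal_cone {n} (X : vec n -> Prop) (x : vec n) : vec n -> Prop :=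
  polar (tangent_cone X x).

(* constraints g_0, ..., g_{m-1} (0-based indexing of g_1..g_m) *)
Definition feasible {n} (X : vec n -> Prop) (m : nat) (g : nat -> vec n -> R)
  : vec n -> Prop :=
  fun x => X x /\ forall i, (i < m)%nat -> g i x <= 0.

Definition minimizers {n} (f : vec n -> R) (X : vec n -> Prop) (m : nat)
  (g : nat -> vec n -> R) : vec n -> Prop :=
  fun x => feasible X m g x /\ forall y, feasible X m g y -> f x <= f y.

Definition active {n} (m : nat) (g : nat -> vec n -> R) (x : vec n) (i : nat) : Prop :=
  (i < m)%nat /\ g i x = 0.

Definition GMFCQ {n} (X : vec n -> Prop) (m : nat) (g : nat -> vec n -> R)
  (grad_g : nat -> vec n -> vec n) (xb : vec n) : Prop :=
  exists y, polar (normal_cone X xb) y /\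
    forall i, active m g xb i -> dot (grad_g i xb) y < 0.

Definition active_sum {n} (m : nat) (g : nat -> vec n -> R)
  (grad_g : nat -> vec n -> vec n) (lam : nat -> R) (xb : vec n) : vec n :=
  fold_right (fun i acc =>
      if Req_EM_T (g i xb) 0 then vadd (vscal (lam i) (grad_g i xb)) acc else acc)
    vzero (seq 0 m).

Definition KKT_multiplier {n} (X : vec n -> Prop) (grad_f : vec n -> vec n)
  (m : nat) (g : nat -> vec n -> R) (grad_g : nat -> vec n -> vec n)
  (xb : vec n) (lam : nat -> R) : Prop :=
  (forall i, (i < m)%nat -> lam i >= 0) /\
  (forall i, (i < m)%nat -> lam i * g i xb = 0) /\
  (forall x, X x ->
     dot (vadd (grad_f xb) (active_sum m g grad_g lam xb)) (vsub x xb) >= 0).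

Definition active_pos {n} (m : nat) (g : nat -> vec n -> R) (xb : vec n)
  (lam : nat -> R) (i : nat) : Prop :=
  (i < m)%nat /\ g i xb = 0 /\ lam i > 0.

Definition X1 {n} (X : vec n -> Prop) (m : nat) (g : nat -> vec n -> R)
  (xb : vec n) (lam : nat -> R) : vec n -> Prop :=
  fun x => X x /\
    (forall i, active_pos m g xb lam i -> g i x = 0) /\
    (forall i, (i < m)%nat -> ~ active_pos m g xb lam i -> g i x <= 0).

(* Main.v *)
Require Import Defs.
From Stdlib Require Import Reals List Lra Lia Classical FunctionalExtensionality.
From Stdlib Require Fin.
Open Scope R_scope.

Lemma dot_add_l : forall n (a b c : vec n), dot (vadd a b) c = dot a c + dot b c.
Proof. induction n; intros; simpl. lra.
  pose proof (IHn (fun i => a (Fin.FS i)) (fun i => b (Fin.FS i)) (fun i => c (Fin.FS i))) as E.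
  unfold vadd in *; cbv beta in *. rewrite E. ring. Qed.

Lemma dot_scal_l : forall n s (a c : vec n), dot (vscal s a) c = s * dot a c.
Proof. induction n; intros; simpl. lra.
  pose proof (IHn s (fun i => a (Fin.FS i)) (fun i => c (Fin.FS i))) as E.
  unfold vscal in *; cbv beta in *. rewrite E. ring. Qed.

Lemma dot_comm : forall n (a c : vec n), dot a c = dot c a.
Proof. induction n; intros; simpl. lra.
  rewrite (IHn (fun i => a (Fin.FS i)) (fun i => c (Fin.FS i))). ring. Qed.

Lemma dot_add_r n (a b c : vec n) : dot c (vadd a b) = dot c a + dot c b.
Proof. rewrite !(dot_comm _ c). apply dot_add_l. Qed.

Lemma dot_scal_r n s (a c : vec n) : dot c (vscal s a) = s * dot c a.
Proof. rewrite !(dot_comm _ c). apply dot_scal_l. Qed.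

Lemma dot_zero_l : forall n (c : vec n), dot vzero c = 0.
Proof. induction n; intros; simpl. lra.
  pose proof (IHn (fun i => c (Fin.FS i))) as E.
  unfold vzero in *; cbv beta in *. rewrite E. ring. Qed.

Lemma dot_zero_r n (c : vec n) : dot c vzero = 0.
Proof. rewrite dot_comm. apply dot_zero_l. Qed.

Lemma dot_nonneg : forall n (a : vec n), 0 <= dot a a.
Proof. induction n; intros; simpl. lra.
  pose proof (IHn (fun i => a (Fin.FS i))). nra. Qed.

Lemma dot_lb : forall n (a b : vec n), 4 * dot a b >= -4 * dot a a - dot b b.
Proof. induction n; intros; simpl. lra.
  pose proof (IHn (fun i => a (Fin.FS i)) (fun i => b (Fin.FS i))).
  pose proof (Rle_0_sqr (2 * a Fin.F1 + b Fin.F1)). unfold Rsqr in *. nra. Qed.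

Lemma dot_eq0 : forall n (v : vec n), dot v v <= 0 -> forall i, v i = 0.
Proof. induction n; intros v H i.
  - exact (Fin.case0 (fun i => v i = 0) i).
  - simpl in H. pose proof (dot_nonneg n (fun i => v (Fin.FS i))).
    assert (v Fin.F1 = 0) by nra.
    refine (Fin.caseS' i (fun i => v i = 0) _ _); auto.
    intro q. apply (IHn (fun j => v (Fin.FS j))). nra. Qed.

Lemma dot_pos n (v : vec n) : v <> vzero -> dot v v > 0.
Proof. intro H. destruct (Rlt_dec 0 (dot v v)); auto. exfalso; apply H.
  apply functional_extensionality; intro i. apply dot_eq0. lra. Qed.

Lemma norm_scal n s (v : vec n) : norm (vscal s v) = Rabs s * norm v.
Proof. unfold norm. rewrite dot_scal_l, dot_scal_r.
  replace (s * (s * dot v v)) with ((s*s) * dot v v) by ring.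
  rewrite sqrt_mult_alt. rewrite <- (sqrt_Rsqr_abs s). reflexivity. nra. Qed.

Lemma norm_pos n (v : vec n) : v <> vzero -> norm v > 0.
Proof. intro H. unfold norm. apply sqrt_lt_R0. apply dot_pos; auto. Qed.

Lemma norm_sq n (v : vec n) : norm v * norm v = dot v v.
Proof. unfold norm. apply sqrt_sqrt. apply dot_nonneg. Qed.

Lemma norm_nonneg n (v : vec n) : 0 <= norm v.
Proof. unfold norm. apply sqrt_pos. Qed.

Lemma abs_le_inv x b : Rabs x <= b -> -b <= x <= b.
Proof. unfold Rabs; destruct Rcase_abs; lra. Qed.

Lemma le_div_mul a b c : c > 0 -> a <= b / c -> a * c <= b.
Proof. intros Hc H. apply (Rmult_le_compat_r c) in H; [|lra].
  replace (b / c * c) with b in H by (field; lra). exact H. Qed.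

Ltac vext := apply functional_extensionality; intro; unfold vsub, vadd, vscal, vzero; ring.

Lemma quasi_grad n (G : vec n -> Prop) h y z Gy :
  quasiconvex_on G h -> G y -> G z -> has_grad h y Gy -> h z <= h y ->
  dot Gy (vsub z y) <= 0.
Proof.
  intros Hq Hy Hz Hg Hle.
  destruct (Rle_dec (dot Gy (vsub z y)) 0) as [|Hd]; auto. exfalso.
  set (D := dot Gy (vsub z y)) in *.
  destruct (classic (vsub z y = vzero)) as [E|E].
  { unfold D in Hd. rewrite E, dot_zero_r in Hd. lra. }
  pose proof (norm_pos _ _ E) as Hnu. set (nu := norm (vsub z y)) in *.
  destruct (Hg (D / (2 * nu))) as [delta [Hdel Hd2]].
  { apply Rdiv_lt_0_compat; lra. }
  set (s := Rmin 1 (delta / (2 * nu))).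
  assert (Hs0 : 0 < s). { unfold s; apply Rmin_glb_lt; [lra|apply Rdiv_lt_0_compat; lra]. }
  assert (Hs1 : s <= 1) by (unfold s; apply Rmin_l).
  assert (Hs2 : s * (2 * nu) <= delta).
  { apply le_div_mul; [lra|]. unfold s; apply Rmin_r. }
  pose proof (Hq y z s Hy Hz (conj (Rlt_le _ _ Hs0) Hs1)) as Hq1.
  rewrite Rmax_left in Hq1 by lra.
  assert (Ew : vsub (vadd y (vscal s (vsub z y))) y = vscal s (vsub z y)) by vext.
  specialize (Hd2 (vadd y (vscal s (vsub z y)))).
  rewrite Ew, norm_scal, dot_scal_r, Rabs_right in Hd2 by lra.
  fold nu D in Hd2.
  assert (s * nu < delta) by nra.
  specialize (Hd2 H). apply abs_le_inv in Hd2.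
  assert (D / (2 * nu) * (s * nu) = s * D / 2) by (field; lra).
  nra.
Qed.

Lemma pseudo_grad n (G : vec n -> Prop) h y z Gy Gz :
  is_open G -> quasiconvex_on G h -> G y -> G z -> has_grad h y Gy ->
  has_grad h z Gz -> Gy <> vzero -> h z < h y -> dot Gy (vsub z y) < 0.
Proof.
  intros Ho Hq Hy Hz Hgy Hgz HG Hlt.
  pose proof (dot_pos _ _ HG) as HN. pose proof (norm_pos _ _ HG) as Hnu.
  set (nu := norm Gy) in *.
  destruct (Ho z Hz) as [e0 [He0 Hball]].
  destruct (Hgz 1) as [delta [Hdel Hd2]]; [lra|].
  set (M := Rabs (dot Gz Gy) + nu + 1).
  assert (HM : M > 0) by (unfold M; pose proof (Rabs_pos (dot Gz Gy)); lra).
  set (s := Rmin (Rmin (e0 / (2 * nu)) (delta / (2 * nu))) ((h y - h z) / (2 * M))).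
  assert (Hs0 : 0 < s).
  { unfold s; repeat apply Rmin_glb_lt; apply Rdiv_lt_0_compat; lra. }
  assert (Hs1 : s * (2 * nu) <= e0).
  { apply le_div_mul; [lra|]. unfold s. eapply Rle_trans; apply Rmin_l. }
  assert (Hs2 : s * (2 * nu) <= delta).
  { apply le_div_mul; [lra|]. unfold s. eapply Rle_trans; [apply Rmin_l|apply Rmin_r]. }
  assert (Hs3 : s * (2 * M) <= h y - h z).
  { apply le_div_mul; [lra|]. unfold s. apply Rmin_r. }
  set (z' := vadd z (vscal s Gy)).
  assert (Ez : vsub z' z = vscal s Gy) by (unfold z'; vext).
  assert (Hn' : norm (vsub z' z) = s * nu).
  { rewrite Ez, norm_scal, Rabs_right by lra. reflexivity. }
  assert (Gz' : G z') by (apply Hball; rewrite Hn'; nra).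
  specialize (Hd2 z'). rewrite Hn', Ez, dot_scal_r in Hd2.
  assert (s * nu < delta) by nra. specialize (Hd2 H). apply abs_le_inv in Hd2.
  pose proof (Rle_abs (dot Gz Gy)).
  assert (h z' < h y) by (unfold M in Hs3; nra).
  pose proof (quasi_grad n G h y z' Gy Hq Hy Gz' Hgy (Rlt_le _ _ H1)) as Hq1.
  assert (vsub z' y = vadd (vsub z y) (vscal s Gy)) by (unfold z'; vext).
  rewrite H2, dot_add_r, dot_scal_r in Hq1. nra.
Qed.

Section S.
Variables (n : nat) (G : vec n -> Prop) (f : vec n -> R) (grad_f : vec n -> vec n)
  (xb x : vec n).
Hypotheses (Ho : is_open G) (Hc : is_convex G) (Hq : quasiconvex_on G f)
  (Hg : forall x, G x -> has_grad f x (grad_f x)) (Hcont : vcont_at grad_f xb)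
  (Hxb : G xb) (Hx : G x) (Hn0 : grad_f xb <> vzero) (Hfeq : f x = f xb)
  (Hdot : dot (grad_f xb) (vsub x xb) = 0).

Lemma seg_const t : 0 <= t <= 1 -> f (vadd xb (vscal t (vsub x xb))) = f xb.
Proof.
  intro Ht. set (zt := vadd xb (vscal t (vsub x xb))).
  assert (Gz : G zt) by (apply Hc; auto).
  pose proof (Hq xb x t Hxb Hx Ht) as H1. fold zt in H1.
  rewrite Rmax_left in H1 by lra.
  destruct (Rlt_dec (f zt) (f xb)) as [Hl|Hl]; [|lra]. exfalso.
  pose proof (pseudo_grad n G f xb zt _ _ Ho Hq Hxb Gz (Hg xb Hxb) (Hg zt Gz) Hn0 Hl).
  assert (vsub zt xb = vscal t (vsub x xb)) by (unfold zt; vext).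
  rewrite H0, dot_scal_r, Hdot in H. lra.
Qed.

Lemma grad_orth : dot (grad_f x) (vsub xb x) = 0.
Proof.
  pose proof (quasi_grad n G f x xb _ Hq Hx Hxb (Hg x Hx) (Req_le _ _ (eq_sym Hfeq))).
  destruct (Rlt_dec (dot (grad_f x) (vsub xb x)) 0) as [Hd|Hd]; [|lra]. exfalso.
  set (D := dot (grad_f x) (vsub xb x)) in *.
  destruct (classic (vsub xb x = vzero)) as [E|E].
  { unfold D in Hd. rewrite E, dot_zero_r in Hd. lra. }
  pose proof (norm_pos _ _ E) as Hnu. set (nu := norm (vsub xb x)) in *.
  destruct (Hg x Hx (- D / (2 * nu))) as [delta [Hdel Hd2]].
  { apply Rdiv_lt_0_compat; lra. }
  set (s := Rmin 1 (delta / (2 * nu))).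
  assert (Hs0 : 0 < s). { unfold s; apply Rmin_glb_lt; [lra|apply Rdiv_lt_0_compat; lra]. }
  assert (Hs1 : s <= 1) by (unfold s; apply Rmin_l).
  assert (Hs2 : s * (2 * nu) <= delta).
  { apply le_div_mul; [lra|]. unfold s; apply Rmin_r. }
  assert (Ew : vadd x (vscal s (vsub xb x)) = vadd xb (vscal (1 - s) (vsub x xb))) by vext.
  assert (Hf : f (vadd x (vscal s (vsub xb x))) = f x).
  { rewrite Ew, seg_const, Hfeq; auto. lra. }
  assert (Ew2 : vsub (vadd x (vscal s (vsub xb x))) x = vscal s (vsub xb x)) by vext.
  specialize (Hd2 (vadd x (vscal s (vsub xb x)))).
  rewrite Ew2, norm_scal, dot_scal_r, Rabs_right, Hf in Hd2 by lra.
  fold nu D in Hd2.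
  assert (s * nu < delta) by nra.
  specialize (Hd2 H0). apply abs_le_inv in Hd2.
  assert (- D / (2 * nu) * (s * nu) = - s * D / 2) by (field; lra).
  nra.
Qed.

Lemma grad_nz : grad_f x <> vzero.
Proof.
  intro Hz.
  set (n0 := grad_f xb) in *. set (e := vsub x xb) in *.
  pose proof (dot_pos _ _ Hn0) as HN. pose proof (norm_pos _ _ Hn0) as Hnu.
  pose proof (norm_sq _ n0) as Hsq.
  set (nu := norm n0) in *. set (N := dot n0 n0) in *.
  destruct (Hcont (nu / 2)) as [d0 [Hd0 Hc0]]; [lra|].
  pose proof (norm_nonneg _ e) as Hne.
  set (t := Rmin (1/2) (d0 / (2 * (norm e + 1)))).
  assert (Ht0 : 0 < t). { unfold t; apply Rmin_glb_lt; [lra|apply Rdiv_lt_0_compat; lra]. }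
  assert (Ht1 : t <= 1/2) by (unfold t; apply Rmin_l).
  assert (Ht2 : t * (2 * (norm e + 1)) <= d0).
  { apply le_div_mul; [lra|]. unfold t; apply Rmin_r. }
  set (zt := vadd xb (vscal t e)).
  assert (Gzt : G zt) by (apply Hc; auto; lra).
  assert (Fzt : f zt = f xb) by (apply seg_const; lra).
  assert (Ezt : vsub zt xb = vscal t e) by (unfold zt; vext).
  specialize (Hc0 zt). rewrite Ezt, norm_scal, Rabs_right in Hc0 by lra.
  specialize (Hc0 ltac:(nra)).
  fold n0 in Hc0. set (w := vsub (grad_f zt) n0) in *.
  pose proof (norm_sq _ w). pose proof (norm_nonneg _ w).
  assert (Hww : dot w w < N / 4).
  { assert (norm w * norm w < (nu/2) * (nu/2)) by (apply Rmult_le_0_lt_compat; lra).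
    nra. }
  pose proof (dot_lb _ w n0) as Hlb. fold N in Hlb.
  set (gam := dot (grad_f zt) n0).
  assert (Egam : gam = dot w n0 + N).
  { unfold gam. replace (grad_f zt) with (vadd w n0) by (unfold w; vext).
    rewrite dot_add_l. reflexivity. }
  assert (Hgam : gam > N / 2).
  { rewrite Egam. idtac. lra. }
  set (K := (2 - t) / t).
  assert (HK : K > 0) by (unfold K; apply Rdiv_lt_0_compat; lra).
  destruct (Hg zt Gzt (gam / (4 * nu))) as [d3 [Hd3 Hg3]].
  { apply Rdiv_lt_0_compat; lra. }
  destruct (Hg xb Hxb (nu / 2)) as [d1 [Hd1 Hg1]]; [lra|].
  destruct (Hg x Hx (gam / (2 * K * nu))) as [d2 [Hd2 Hg2]].
  { apply Rdiv_lt_0_compat; [lra|]. apply Rmult_lt_0_compat; lra. }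
  destruct (Ho xb Hxb) as [r1 [Hr1 Hb1]].
  destruct (Ho x Hx) as [r2 [Hr2 Hb2]].
  set (mm := Rmin (Rmin (Rmin d1 r1) (Rmin d2 r2)) d3).
  assert (Hmm : 0 < mm) by (unfold mm; repeat apply Rmin_glb_lt; lra).
  assert (Hm1 : mm <= d1 /\ mm <= r1 /\ mm <= d2 /\ mm <= r2 /\ mm <= d3).
  { unfold mm.
    pose proof (Rmin_l (Rmin (Rmin d1 r1) (Rmin d2 r2)) d3).
    pose proof (Rmin_r (Rmin (Rmin d1 r1) (Rmin d2 r2)) d3).
    pose proof (Rmin_l (Rmin d1 r1) (Rmin d2 r2)).
    pose proof (Rmin_r (Rmin d1 r1) (Rmin d2 r2)).
    pose proof (Rmin_l d1 r1). pose proof (Rmin_r d1 r1).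
    pose proof (Rmin_l d2 r2). pose proof (Rmin_r d2 r2).
    repeat split; lra. }
  set (al := mm / (2 * (K + 1) * nu)).
  assert (Hal : 0 < al) by (unfold al; apply Rdiv_lt_0_compat; nra).
  assert (Hal2 : al * nu * (2 * (K + 1)) = mm) by (unfold al; field; lra).
  set (A := vadd xb (vscal (- al) n0)).
  set (B := vadd x (vscal (K * al) n0)).
  assert (EA : vsub A xb = vscal (- al) n0) by (unfold A; vext).
  assert (EB : vsub B x = vscal (K * al) n0) by (unfold B; vext).
  assert (nA : norm (vsub A xb) = al * nu).
  { rewrite EA, norm_scal, Rabs_left by lra. fold nu; ring. }
  assert (nB : norm (vsub B x) = K * al * nu).
  { rewrite EB, norm_scal, Rabs_right by nra. fold nu; ring. }
  assert (GA : G A) by (apply Hb1; rewrite nA; nra).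
  assert (GB : G B) by (apply Hb2; rewrite nB; nra).
  assert (Emid : vadd A (vscal t (vsub B A)) = vadd zt (vscal al n0)).
  { unfold A, B, zt, e. apply functional_extensionality; intro i.
    unfold vsub, vadd, vscal. unfold K. field. lra. }
  pose proof (Hq A B t GA GB ltac:(lra)) as HQ. rewrite Emid in HQ.
  specialize (Hg1 A). rewrite nA, EA, dot_scal_r in Hg1. fold N in Hg1.
  specialize (Hg1 ltac:(nra)). apply abs_le_inv in Hg1.
  specialize (Hg2 B). rewrite nB, Hz, dot_zero_l, Hfeq in Hg2.
  specialize (Hg2 ltac:(nra)). apply abs_le_inv in Hg2.
  assert (gam / (2 * K * nu) * (K * al * nu) = al * gam / 2) by (field; lra).
  specialize (Hg3 (vadd zt (vscal al n0))).
  replace (vsub (vadd zt (vscal al n0)) zt) with (vscal al n0) in Hg3 by vext.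
  rewrite norm_scal, dot_scal_r, Rabs_right, Fzt in Hg3 by lra. fold nu gam in Hg3.
  specialize (Hg3 ltac:(nra)). apply abs_le_inv in Hg3.
  assert (gam / (4 * nu) * (al * nu) = al * gam / 4) by (field; lra).
  assert (Rmax (f A) (f B) <= f xb + al * gam / 2).
  { assert (nu / 2 * (al * nu) = al * N / 2) by (rewrite <- Hsq; field).
    assert (0 < al * N) by (apply Rmult_lt_0_compat; lra).
    assert (0 < al * gam) by (apply Rmult_lt_0_compat; lra).
    fold n0 N in Hg1. apply Rmax_lub; nra. }
  assert (0 < al * gam) by (apply Rmult_lt_0_compat; lra).
  lra.
Qed.
End S.

Lemma asum_le0 n (g : nat -> vec n -> R) grad_g lam (xb v : vec n) : forall l,
  (forall i, In i l -> g i xb = 0 -> lam i * dot (grad_g i xb) v <= 0) ->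
  dot (fold_right (fun i acc => if Req_EM_T (g i xb) 0
        then vadd (vscal (lam i) (grad_g i xb)) acc else acc) vzero l) v <= 0.
Proof.
  induction l as [|a l IHl]; intros H; simpl.
  - rewrite dot_zero_l; lra.
  - destruct (Req_EM_T (g a xb) 0) as [e|e].
    + rewrite dot_add_l, dot_scal_l.
      pose proof (H a (or_introl eq_refl) e).
      pose proof (IHl (fun i Hi => H i (or_intror Hi))). lra.
    + apply IHl; intros; apply H; simpl; auto.
Qed.

Lemma asum_le_j n (g : nat -> vec n -> R) grad_g lam (xb v : vec n) j : forall l,
  (forall i, In i l -> g i xb = 0 -> lam i * dot (grad_g i xb) v <= 0) ->
  In j l -> g j xb = 0 ->
  dot (fold_right (fun i acc => if Req_EM_T (g i xb) 0
        then vadd (vscal (lam i) (grad_g i xb)) acc else acc) vzero l) v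
   <= lam j * dot (grad_g j xb) v.
Proof.
  induction l as [|a l IHl]; intros H Hj Hgj; simpl.
  - destruct Hj.
  - destruct (Req_EM_T (g a xb) 0) as [e|e].
    + rewrite dot_add_l, dot_scal_l.
      destruct (Nat.eq_dec a j) as [->|Ha].
      * pose proof (asum_le0 n g grad_g lam xb v l (fun i Hi => H i (or_intror Hi))). lra.
      * destruct Hj as [->|Hj]; [congruence|].
        pose proof (H a (or_introl eq_refl) e).
        pose proof (IHl (fun i Hi => H i (or_intror Hi)) Hj Hgj). lra.
    + destruct Hj as [->|Hj]; [contradiction|].
      apply IHl; auto. intros; apply H; simpl; auto.
Qed.

Theorem theorem5 (n m : nat) (Gamma X : vec n -> Prop)
  (f : vec n -> R) (grad_f : vec n -> vec n)
  (g : nat -> vec n -> R) (grad_g : nat -> vec n -> vec n)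
  (xb : vec n) (lam : nat -> R) :
  is_open Gamma -> is_convex Gamma ->
  (forall x, X x -> Gamma x) -> is_convex X ->
  minimizers f X m g xb ->
  (forall x, Gamma x -> has_grad f x (grad_f x)) ->
  (forall x, Gamma x -> vcont_at grad_f x) ->
  quasiconvex_on Gamma f ->
  (forall i, active m g xb i ->
     (forall x, Gamma x -> has_grad (g i) x (grad_g i x)) /\
     quasiconvex_on Gamma (g i)) ->
  (forall i, (i < m)%nat -> ~ active m g xb i -> cont_at (g i) xb) ->
  grad_f xb <> vzero ->
  GMFCQ X m g grad_g xb ->
  KKT_multiplier X grad_f m g grad_g xb lam ->
  let S1 := fun x => X1 X m g xb lam x /\
              dot (grad_f x) (vsub xb x) = 0 /\ grad_f x <> vzero in
  let S2 := fun x => X1 X m g xb lam x /\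
              dot (grad_f x) (vsub xb x) >= 0 /\ grad_f x <> vzero in
  let S3 := fun x => X1 X m g xb lam x /\
              dot (grad_f x) (vsub xb x) = dot (grad_f xb) (vsub x xb) /\
              grad_f x <> vzero in
  let S4 := fun x => X1 X m g xb lam x /\
              dot (grad_f x) (vsub xb x) >= dot (grad_f xb) (vsub x xb) /\
              grad_f x <> vzero in
  let S5 := fun x => X1 X m g xb lam x /\
              dot (grad_f x) (vsub xb x) = dot (grad_f xb) (vsub x xb) /\
              dot (grad_f xb) (vsub x xb) = 0 /\
              grad_f x <> vzero in
  forall x,
    (minimizers f X m g x <-> S1 x) /\
    (minimizers f X m g x <-> S2 x) /\
    (minimizers f X m g x <-> S3 x) /\
    (minimizers f X m g x <-> S4 x) /\
    (minimizers f X m g x <-> S5 x).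
Proof.
  intros HGo HGc HXG HXc Hmin Hgf Hgc Hqf Hact Hina Hn0 HGM HKKT.
  cbv zeta. intro x.
  destruct HKKT as [Hlam [Hcs Hkkt]].
  destruct Hmin as [Hfxb Hminxb].
  assert (Gxb : Gamma xb) by (apply HXG; apply Hfxb).
  assert (Hterm : forall y, feasible X m g y -> forall i, In i (seq 0 m) -> g i xb = 0 ->
            lam i * dot (grad_g i xb) (vsub y xb) <= 0).
  { intros y Hy i Hi Hgi.
    apply in_seq in Hi. assert (Ha : active m g xb i) by (split; [lia|auto]).
    destruct (Hact i Ha) as [Hgr Hq].
    assert (dot (grad_g i xb) (vsub y xb) <= 0).
    { apply (quasi_grad n Gamma (g i) xb y); auto. apply HXG, Hy. rewrite Hgi. apply Hy. lia. }
    pose proof (Hlam i ltac:(lia)). nra. }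
  assert (Hfd : forall y, feasible X m g y -> dot (grad_f xb) (vsub y xb) >= 0).
  { intros y Hy. pose proof (Hkkt y (proj1 Hy)) as H. rewrite dot_add_l in H.
    assert (dot (active_sum m g grad_g lam xb) (vsub y xb) <= 0).
    { unfold active_sum. apply asum_le0. apply Hterm; auto. }
    lra. }
  assert (HX1f : forall y, X1 X m g xb lam y -> feasible X m g y).
  { intros y [HyX [H1 H2]]. split; auto. intros i Hi.
    destruct (classic (active_pos m g xb lam i)).
    - rewrite H1; auto; lra.
    - auto. }
  assert (Hback : forall y, X1 X m g xb lam y -> grad_f y <> vzero ->
            dot (grad_f y) (vsub xb y) >= 0 -> minimizers f X m g y).
  { intros y Hy Hny Hd. pose proof (HX1f y Hy) as Hyf.
    assert (Gy : Gamma y) by (apply HXG, Hyf).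
    assert (f y <= f xb).
    { destruct (Rle_dec (f y) (f xb)); auto. exfalso.
      pose proof (pseudo_grad n Gamma f y xb (grad_f y) (grad_f xb) HGo Hqf Gy Gxb
                   (Hgf y Gy) (Hgf xb Gxb) Hny ltac:(lra)). lra. }
    split; auto. intros z Hz. pose proof (Hminxb z Hz). lra. }
  assert (Hfwd : minimizers f X m g x -> X1 X m g xb lam x /\
            dot (grad_f x) (vsub xb x) = 0 /\ dot (grad_f xb) (vsub x xb) = 0 /\
            grad_f x <> vzero).
  { intros [Hxf Hxmin].
    assert (Gx : Gamma x) by (apply HXG, Hxf).
    pose proof (Hxmin xb Hfxb). pose proof (Hminxb x Hxf).
    assert (Hfeq : f x = f xb) by lra.
    assert (Hc : dot (grad_f xb) (vsub x xb) = 0).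
    { pose proof (quasi_grad n Gamma f xb x (grad_f xb) Hqf Gxb Gx (Hgf xb Gxb) ltac:(lra)).
      pose proof (Hfd x Hxf). lra. }
    assert (HX1 : X1 X m g xb lam x).
    { split; [apply Hxf|split].
      - intros j [Hjm [Hgj Hlj]].
        destruct (Req_dec (g j x) 0) as [|Hne]; auto. exfalso.
        assert (Hlt : g j x < g j xb) by (pose proof (proj2 Hxf j Hjm); lra).
        assert (Ha : active m g xb j) by (split; auto).
        destruct (Hact j Ha) as [Hgr Hq].
        assert (Hnz : grad_g j xb <> vzero).
        { destruct HGM as [yy [_ Hyy]]. specialize (Hyy j Ha).
          intro E; rewrite E, dot_zero_l in Hyy; lra. }
        pose proof (pseudo_grad n Gamma (g j) xb x _ _ HGo Hq Gxb Gx (Hgr xb Gxb) (Hgr x Gx) Hnz Hlt) as Hneg.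
        assert (Hs : dot (active_sum m g grad_g lam xb) (vsub x xb) <= lam j * dot (grad_g j xb) (vsub x xb)).
        { unfold active_sum. apply asum_le_j; [apply Hterm; auto | apply in_seq; lia | auto]. }
        pose proof (Hkkt x (proj1 Hxf)) as Hk. rewrite dot_add_l in Hk. nra.
      - intros i Hi _. apply Hxf; auto. }
    refine (conj HX1 (conj _ (conj Hc _))).
    all: idtac.
    - apply (grad_orth n Gamma f grad_f xb x); auto.
    - apply (grad_nz n Gamma f grad_f xb x); auto. }
  split; [|split; [|split; [|split]]]; split.
  - intro H; destruct (Hfwd H) as (?&?&?&?); auto.
  - intros (?&?&?). apply Hback; auto; lra.
  - intro H; destruct (Hfwd H) as (?&?&?&?); split; [auto|split; [lra|auto]].
  - intros (?&?&?). apply Hback; auto.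
  - intro H; destruct (Hfwd H) as (?&?&?&?); split; [auto|split; [lra|auto]].
  - intros (?&?&?). apply Hback; auto. pose proof (Hfd x (HX1f x H)). lra.
  - intro H; destruct (Hfwd H) as (?&?&?&?); split; [auto|split; [lra|auto]].
  - intros (?&?&?). apply Hback; auto. pose proof (Hfd x (HX1f x H)). lra.
  - intro H; destruct (Hfwd H) as (?&?&?&?); split; [auto|split; [lra|split; [lra|auto]]].
  - intros (?&?&?&?). apply Hback; auto. lra.
Qed.
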